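(* Let $T$ be a complete theory in a language $\mathcal{L}$ with monster model $\mathbb{M}$, and let $\varphi(x;y_1,\ldots,y_r)\in\mathcal{L}$ be an NIP formula. Then there exist $d'=d'(\varphi)\in\mathbb{N}$ and a finite set of $\mathcal{L}$-formulas $\Delta$ such that: for every $k\in\mathbb{N}$, every $b\in\mathbb{M}^x$ and every $\Delta$-indiscernible $k$-dimensional array $(a_{\bar i}:\bar i\in I_1\times\cdots\times I_k)$ with each $I_s$ a finite linear order, there exist $\bar j_1,\ldots,\bar j_{d'}\in I_1\times\cdots\times I_k$ such that for all $\bar i^\alpha_1,\ldots,\bar i^\alpha_r\in I_1\times\cdots\times I_k$ ($\alpha\in\{0,1\}$): if for every $1\le s\le k$, $$\operatorname{qftp}_<(i^0_{1,s},\ldots,i^0_{r,s}/j_{1,s},\ldots,j_{d',s})=\operatorname{qftp}_<(i^1_{1,s},\ldots,i^1_{r,s}/j_{1,s},\ldots,j_{d',s}),$$ then $\models\varphi(b;a_{\bar i^0_1},\ldots,a_{\bar i^0_r})\leftrightarrow\varphi(b;a_{\bar i^1_1},\ldots,a_{\bar i^1_r})$.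
   Context: A formula is NIP if every formula obtained from it by partitioning its variables into two groups is NIP. Tuples $\bar i=(i_1,\ldots,i_k)$ have coordinates written $i_s$ (so $\bar i^\alpha_t=(i^\alpha_{t,1},\ldots,i^\alpha_{t,k})$ and $\bar j_t=(j_{t,1},\ldots,j_{t,k})$); $\operatorname{qftp}_<$ is the quantifier-free type in the language of the order. An array $(a_{\bar i}:\bar i\in I_1\times\cdots\times I_k)$ is $\Delta$-indiscernible if for every $\psi(x_1,\ldots,x_m)\in\Delta$ and all $\bar i^\alpha_1,\ldots,\bar i^\alpha_m$, $\alpha\in\{0,1\}$, such that for each coordinate $s$ the tuples $(i^0_{1,s},\ldots,i^0_{m,s})$ and $(i^1_{1,s},\ldots,i^1_{m,s})$ have the same quantifier-free order type, we have $\models\psi(a_{\bar i^0_1},\ldots,a_{\bar i^0_m})\leftrightarrow\psi(a_{\bar i^1_1},\ldots,a_{\bar i^1_m})$. *)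

(* Defs.v *)
From Stdlib Require Lists.List.
From mathcomp Require Import all_boot.
Set Implicit Arguments. Unset Strict Implicit. Unset Printing Implicit Defensive.

Record language := Language {
  funs : Type; fun_arity : funs -> nat;
  rels : Type; rel_arity : rels -> nat }.

Inductive term (L : language) (V : Type) : Type :=
| tvar : V -> term L V
| tapp : forall f : funs L, ('I_(fun_arity f) -> term L V) -> term L V.

Inductive form (L : language) : Type -> Type :=
| fEq  : forall V, term L V -> term L V -> form L V
| fRel : forall V (R : rels L), ('I_(rel_arity R) -> term L V) -> form L V
| fNot : forall V, form L V -> form L V
| fAnd : forall V, form L V -> form L V -> form L V
| fOr  : forall V, form L V -> form L V -> form L V
| fEx  : forall V, form L (option V) -> form L V
| fAll : forall V, form L (option V) -> form L V.

Record structure (L : language) := Structure {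
  carrier :> Type;
  finterp : forall f : funs L, ('I_(fun_arity f) -> carrier) -> carrier;
  rinterp : forall R : rels L, ('I_(rel_arity R) -> carrier) -> Prop }.

Fixpoint teval (L : language) (M : structure L) (V : Type) (e : V -> M)
  (t : term L V) {struct t} : M :=
  match t with
  | tvar v => e v
  | tapp f ts => @finterp L M f (fun i => teval e (ts i))
  end.

Definition ext (M V : Type) (e : V -> M) (a : M) : option V -> M :=
  fun o => match o with Some v => e v | None => a end.

Fixpoint sat (L : language) (M : structure L) (V : Type) (phi : form L V)
  {struct phi} : (V -> M) -> Prop :=
  match phi in form _ V' return (V' -> M) -> Prop with
  | fEq _ t1 t2 => fun e => teval e t1 = teval e t2
  | fRel _ R ts => fun e => @rinterp L M R (fun i => teval e (ts i))
  | fNot _ p => fun e => ~ sat p e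
  | fAnd _ p q => fun e => sat p e /\ sat q e
  | fOr _ p q => fun e => sat p e \/ sat q e
  | fEx _ p => fun e => exists a : M, sat p (ext e a)
  | fAll _ p => fun e => forall a : M, sat p (ext e a)
  end.

(* phi(u; w) where u are the variables in P and w the remaining ones is NIP
   (in Th(M)): some finite set of u-tuples cannot be shattered in M. *)
Definition NIP_partition (L : language) (M : structure L) (V : Type)
  (phi : form L V) (P : V -> bool) : Prop :=
  exists N : nat, ~ exists (u : 'I_N -> V -> M) (w : {set 'I_N} -> V -> M),
    forall (i : 'I_N) (S : {set 'I_N}),
      sat phi (fun v => if P v then u i v else w S v) <-> i \in S.

Definition NIP (L : language) (M : structure L) (V : Type) (phi : form L V) :=
  forall P : V -> bool, NIP_partition M phi P.

(* Equality of quantifier-free order types of two tuples of naturals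
   (ordinals 'I_N carry the restriction of the order of nat). *)
Definition qftp_eq (A : Type) (u v : A -> nat) : Prop :=
  forall l l' : A, (u l < u l') = (v l < v l') /\ (u l == u l') = (v l == v l').

(* concatenation of a tuple t with a parameter tuple c: qftp(t / c) *)
Definition tp_over (p d : nat) (t : 'I_p -> nat) (c : 'I_d -> nat) :
  'I_p + 'I_d -> nat :=
  fun z => match z with inl l => t l | inr q => c q end.

(* Index tuples of a k-dimensional array over I_1 x ... x I_k with
   I_s = 'I_(N s). *)
Definition idx (k : nat) (N : 'I_k -> nat) := forall s : 'I_k, 'I_(N s).

(* Delta-indiscernibility of an array of m-tuples. A formula of Delta is a
   formula psi(x_1,...,x_p) with each x_l an m-tuple of variables. *)
Definition indiscernible (L : language) (M : structure L) (m : nat)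
  (Delta : seq {p : nat & form L ('I_p * 'I_m)}) (k : nat) (N : 'I_k -> nat)
  (a : idx N -> 'I_m -> M) : Prop :=
  forall psi, Stdlib.Lists.List.In psi Delta ->
  forall (i0 i1 : 'I_(projT1 psi) -> idx N),
    (forall s : 'I_k, qftp_eq (fun l => nat_of_ord (i0 l s))
                              (fun l => nat_of_ord (i1 l s))) ->
    (sat (projT2 psi) (fun z => a (i0 z.1) z.2) <->
     sat (projT2 psi) (fun z => a (i1 z.1) z.2)).

(* Main.v *)
Require Import Defs.
From mathcomp Require Import all_boot zify.
From Stdlib Require Import FunctionalExtensionality ClassicalEpsilon Classical.
Set Implicit Arguments. Unset Strict Implicit. Unset Printing Implicit Defensive.

Fixpoint trename (L : language) (V W : Type) (sg : V -> W) (t : term L V) : term L W :=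
  match t with
  | tvar v => tvar L (sg v)
  | tapp f ts => tapp (fun i => trename sg (ts i))
  end.

Fixpoint frename (L : language) (V : Type) (p : form L V) {struct p} :
  forall W, (V -> W) -> form L W :=
  match p in form _ V0 return forall W, (V0 -> W) -> form L W with
  | fEq _ t1 t2 => fun W sg => fEq (trename sg t1) (trename sg t2)
  | fRel _ R ts => fun W sg => @fRel L W R (fun i => trename sg (ts i))
  | fNot _ q => fun W sg => fNot (frename q sg)
  | fAnd _ q1 q2 => fun W sg => fAnd (frename q1 sg) (frename q2 sg)
  | fOr _ q1 q2 => fun W sg => fOr (frename q1 sg) (frename q2 sg)
  | fEx _ q => fun W sg => fEx (frename q (option_map sg))
  | fAll _ q => fun W sg => fAll (frename q (option_map sg))
  end.

Lemma teval_rename (L : language) (M : structure L) V W (sg : V -> W) (e : W -> M) t :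
  teval e (trename sg t) = teval (fun v => e (sg v)) t.
Proof.
elim: t => [v|f ts IH] //=; congr (finterp _); apply: functional_extensionality => i; exact: IH.
Qed.

Lemma ext_map (M V W : Type) (sg : V -> W) (e : W -> M) a :
  (fun o => ext e a (option_map sg o)) = ext (fun v => e (sg v)) a.
Proof. by apply: functional_extensionality => -[]. Qed.

Lemma sat_rename (L : language) (M : structure L) V (p : form L V) :
  forall W (sg : V -> W) (e : W -> M), sat (frename p sg) e <-> sat p (fun v => e (sg v)).
Proof.
elim: p => {}V.
- move=> t1 t2 W sg e /=; by rewrite !teval_rename.
- move=> R ts W sg e /=.
  have -> : (fun i => teval e (trename sg (ts i))) = (fun i => teval (fun v => e (sg v)) (ts i)).
    by apply: functional_extensionality => i; rewrite teval_rename.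
  by [].
- move=> q IH W sg e /=; by rewrite IH.
- move=> q1 IH1 q2 IH2 W sg e /=; by rewrite IH1 IH2.
- move=> q1 IH1 q2 IH2 W sg e /=; by rewrite IH1 IH2.
- move=> q IH W sg e /=; split=> -[a Ha]; exists a.
    by move: Ha; rewrite IH ext_map.
  by rewrite IH ext_map.
- move=> q IH W sg e /=; split=> Ha a.
    by move: (Ha a); rewrite IH ext_map.
  by rewrite IH ext_map.
Qed.

Definition from0 (W : Type) (i : 'I_0) : W.
Proof. by case: i. Defined.

Definition shift1 (n : nat) (W : Type) (z : 'I_n.+1 + W) : option ('I_n + W) :=
  match z with
  | inl i => match unlift ord0 i with None => None | Some i' => Some (inl i') end
  | inr w => Some (inr w)
  end.

Fixpoint exn (L : language) (W : Type) (n : nat) : form L ('I_n + W) -> form L W :=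
  match n return form L ('I_n + W) -> form L W with
  | 0 => fun p => frename p (fun z => match z with inl i => from0 W i | inr w => w end)
  | n'.+1 => fun p => exn (fEx (frename p (@shift1 n' W)))
  end.

Definition catv (M W : Type) (n : nat) (x : 'I_n -> M) (e : W -> M) : 'I_n + W -> M :=
  fun z => match z with inl i => x i | inr w => e w end.

Lemma sat_exn (L : language) (M : structure L) W n (p : form L ('I_n + W)) (e : W -> M) :
  sat (exn p) e <-> exists x : 'I_n -> M, sat p (catv x e).
Proof.
elim: n p e => [|n IH] p e /=.
  rewrite sat_rename; split.
    move=> H; exists (fun i => from0 M i).
    by have -> : catv (fun i => from0 M i) e = (fun v => e match v with inl i => from0 W i | inr w => w end)
      by apply: functional_extensionality => -[[]|].
  move=> [x Hx]; move: Hx.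
  by have -> : catv x e = (fun v => e match v with inl i => from0 W i | inr w => w end)
      by apply: functional_extensionality => -[[]|].
rewrite IH; split.
  move=> [x Hx].
  have [a Ha] : exists a, sat (frename p (@shift1 n W)) (ext (catv x e) a) := Hx.
  move: Ha; rewrite sat_rename => Ha.
  exists (fun i => match unlift ord0 i with None => a | Some i' => x i' end).
  move: Ha; congr sat; apply: functional_extensionality => -[i|w] //=.
  by case: unliftP.
move=> [y Hy]; exists (fun i => y (lift ord0 i)); exists (y ord0).
rewrite sat_rename; move: Hy; congr sat; apply: functional_extensionality => -[i|w] //=.
by case: unliftP => [j ->|->].
Qed.

Definition ftrue (L : language) (W : Type) : form L W :=
  fAll (fEq (tvar L None) (tvar L None)).

Definition conj (L : language) (W : Type) (l : seq (form L W)) : form L W :=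
  foldr (@fAnd L W) (ftrue L W) l.

Lemma sat_conj (L : language) (M : structure L) W (T : eqType) (g : T -> form L W)
   (s : seq T) (e : W -> M) :
  sat (conj (map g s)) e <-> (forall x, x \in s -> sat (g x) e).
Proof.
elim: s => [|y s IH] /=.
  by split=> // _ x.
change (sat (g y) e /\ sat (conj (map g s)) e <-> (forall x, x \in y :: s -> sat (g x) e)).
rewrite IH; split.
  by move=> [H1 H2] x; rewrite inE => /orP[/eqP->|]; auto.
move=> H; split; first by apply: H; rewrite inE eqxx.
by move=> x xs; apply: H; rewrite inE xs orbT.
Qed.

Definition upd k (N : 'I_k -> nat) (x : idx N) (s : 'I_k) (w : nat) : idx N :=
  fun s' => insubd (x s') (if s' == s then w else nat_of_ord (x s')).

Lemma upd_val k (N : 'I_k -> nat) (x : idx N) s w s' :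
  nat_of_ord (upd x s w s') = if s' == s then (if w < N s' then w else x s') else x s'.
Proof.
rewrite /upd val_insubd; case: (s' == s) => //.
by rewrite ltn_ord.
Qed.

Definition mv k (N : 'I_k -> nat) r (i : 'I_r -> idx N) (s : 'I_k) (v : nat) : 'I_r -> idx N :=
  fun l => if nat_of_ord (i l s) == v then upd (i l) s v.+1 else i l.

Definition sh (v z : nat) := if z == v then v.+1 else z.

Lemma mv_val k (N : 'I_k -> nat) r (i : 'I_r -> idx N) s v l s' :
  v.+1 < N s ->
  nat_of_ord (mv i s v l s') = if s' == s then sh v (i l s') else i l s'.
Proof.
move=> Hv; rewrite /mv /sh; case: (eqVneq s' s) => [->|NE]; case: eqP => [E|NE'] //.
- by rewrite upd_val E !eqxx Hv.
- by rewrite upd_val (negbTE NE).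
Qed.

Definition flip k (N : 'I_k -> nat) r (F : ('I_r -> idx N) -> Prop) (s : 'I_k) (v : nat) :=
  exists i : 'I_r -> idx N, [/\ v.+1 < N s, (exists l, nat_of_ord (i l s) = v),
    (forall l, nat_of_ord (i l s) <> v.+1) & ~ (F i <-> F (mv i s v))].

Definition mu k (N : 'I_k -> nat) r (s : 'I_k) (i i' : 'I_r -> idx N) :=
  \sum_(l < r) ((nat_of_ord (i l s) - i' l s) + (nat_of_ord (i' l s) - i l s)).

Definition hypB k (N : 'I_k -> nat) r (s : 'I_k) (J : pred nat) (i i' : 'I_r -> idx N) :=
  [/\ (forall l s', s' != s -> i l s' = i' l s'),
      (forall l l', (nat_of_ord (i l s) < i l' s) = (nat_of_ord (i' l s) < i' l' s) /\
                    (nat_of_ord (i l s) == i l' s) = (nat_of_ord (i' l s) == i' l' s)) &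
      (forall l w, J w -> (nat_of_ord (i l s) < w) = (nat_of_ord (i' l s) < w) /\
                    (nat_of_ord (i l s) == w) = (nat_of_ord (i' l s) == w))].

Lemma hypB_sym k (N : 'I_k -> nat) r s J (i i' : 'I_r -> idx N) :
  hypB s J i i' -> hypB s J i' i.
Proof.
case=> H1 H2 H3; split.
- by move=> l s' Hs; rewrite (H1 l s' Hs).
- by move=> l l'; case: (H2 l l') => -> ->.
- by move=> l w Jw; case: (H3 l w Jw) => -> ->.
Qed.

Lemma mu_sym k (N : 'I_k -> nat) r s (i i' : 'I_r -> idx N) : mu s i i' = mu s i' i.
Proof. by apply: eq_bigr => l _; rewrite addnC. Qed.

Lemma sh_cmp v x y : x <> v.+1 -> y <> v.+1 ->
  (sh v x < sh v y) = (x < y) /\ (sh v x == sh v y) = (x == y).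
Proof.
rewrite /sh => Hx Hy; case: eqP => Ex; case: eqP => Ey; split; lia.
Qed.

Lemma sh_cmpw v x w : x <> v.+1 -> w <> v -> w <> v.+1 ->
  (sh v x < w) = (x < w) /\ (sh v x == w) = (x == w).
Proof. rewrite /sh => Hx Hw1 Hw2; case: eqP => Ex; split; lia. Qed.

Lemma one_step k (N : 'I_k -> nat) r (F : ('I_r -> idx N) -> Prop) s (J : pred nat) :
  (forall v, flip F s v -> J v) ->
  forall i i', hypB s J i i' -> (exists l, nat_of_ord (i l s) < i' l s) ->
  exists i'', [/\ F i <-> F i'', hypB s J i'' i' & mu s i'' i' < mu s i i'].
Proof.
move=> HJ i i' [H1 H2 H3] [l1 Hl1].
pose P := fun l => nat_of_ord (i l s) < i' l s.
case: (@arg_maxnP _ l1 P (fun l => nat_of_ord (i l s)) Hl1) => l0 Pl0 Hmax.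
set v := nat_of_ord (i l0 s).
have Ha : forall l, nat_of_ord (i l s) = v -> v < i' l s.
  move=> l E; case: (H2 l l0) => _; rewrite E eqxx => /esym/eqP ->; exact: Pl0.
have Hb : forall l, nat_of_ord (i l s) <> v.+1.
  move=> l E; case: (H2 l0 l) => H _; move: H; rewrite E ltnSn => /esym H.
  have Pl : P l by rewrite /P E; apply: leq_trans H; exact: Pl0.
  by move: (Hmax l Pl); rewrite /= E -/v ltnn.
have Hc : v.+1 < N s by apply: leq_ltn_trans (ltn_ord (i' l0 s)).
have Hd1 : ~ J v.
  move=> Jv; case: (H3 l0 v Jv) => _; rewrite eqxx => /esym/eqP E.
  by move: (Pl0); rewrite /P E ltnn.
have Hd2 : ~ J v.+1.
  move=> Jv; case: (H3 l0 v.+1 Jv) => H _; move: H; rewrite ltnSn => /esym.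
  move=> H; move: Pl0; rewrite /P -/v; lia.
exists (mv i s v); split.
- apply: NNPP => Hn; apply: Hd1; apply: HJ; exists i; split => //.
  by exists l0.
- split.
  + move=> l s' Hs'; rewrite -H1 //; apply: val_inj => /=.
    by rewrite mv_val // (negbTE Hs').
  + move=> l l'; rewrite !mv_val // eqxx; case: (H2 l l') => <- <-.
    exact: sh_cmp.
  + move=> l w Jw; rewrite mv_val // eqxx; case: (H3 l w Jw) => <- <-.
    apply: sh_cmpw => // E; [apply: Hd1 | apply: Hd2]; by rewrite -E.
- rewrite /mu (bigD1 l0) //= [X in _ < X](bigD1 l0) //=.
  rewrite -addSn; apply: leq_add.
    rewrite mv_val // eqxx /sh eqxx; move: Pl0; rewrite /P -/v; lia.
  apply: leq_sum => l _; rewrite mv_val // eqxx /sh.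
  case: eqP => // E; move: (Ha l E); lia.
Qed.

Lemma eq_tuple k (N : 'I_k -> nat) r (s : 'I_k) (i i' : 'I_r -> idx N) :
  (forall l s', s' != s -> i l s' = i' l s') ->
  (forall l, nat_of_ord (i l s) = i' l s) -> i = i'.
Proof.
move=> H1 H2; apply: functional_extensionality => l.
apply: functional_extensionality_dep => s'.
case: (eqVneq s' s) => [->|NE]; last exact: H1.
by apply: val_inj; apply: H2.
Qed.

Lemma stepB k (N : 'I_k -> nat) r (F : ('I_r -> idx N) -> Prop) s (J : pred nat) :
  (forall v, flip F s v -> J v) ->
  forall i i', hypB s J i i' -> (F i <-> F i').
Proof.
move=> HJ.
suff H : forall m i i', mu s i i' <= m -> hypB s J i i' -> (F i <-> F i').
  by move=> i i'; apply: (H _ i i' (leqnn _)).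
elim=> [|m IH] i i' Hmu Hh.
- case: (boolP [exists l, nat_of_ord (i l s) < i' l s]) => [/existsP Ex|].
    by have [i'' [_ _ Hlt]] := one_step HJ Hh Ex; move: Hmu Hlt; lia.
  case: (boolP [exists l, nat_of_ord (i' l s) < i l s]) => [/existsP Ex|].
    have [i'' [_ _ Hlt]] := one_step HJ (hypB_sym Hh) Ex; move: Hmu Hlt; rewrite mu_sym; lia.
  move=> /existsPn H1 /existsPn H2.
  case: Hh => Hh1 _ _; rewrite (eq_tuple Hh1) //.
  by move=> l; move: (H1 l) (H2 l); lia.
- case: (boolP [exists l, nat_of_ord (i l s) < i' l s]) => [/existsP Ex|].
    have [i'' [E Hh' Hlt]] := one_step HJ Hh Ex; rewrite E; apply: IH Hh'.
    move: Hmu Hlt; lia.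
  case: (boolP [exists l, nat_of_ord (i' l s) < i l s]) => [/existsP Ex|].
    have [i'' [E Hh' Hlt]] := one_step HJ (hypB_sym Hh) Ex.
    rewrite E; symmetry; apply: IH Hh'.
    move: Hmu Hlt; rewrite mu_sym; lia.
  move=> /existsPn H1 /existsPn H2.
  case: Hh => Hh1 _ _; rewrite (eq_tuple Hh1) //.
  by move=> l; move: (H1 l) (H2 l); lia.
Qed.

Definition hypS k (N : 'I_k -> nat) r (s : 'I_k) (J : pred nat) (i i' : 'I_r -> idx N) :=
  (forall l l', (nat_of_ord (i l s) < i l' s) = (nat_of_ord (i' l s) < i' l' s) /\
                (nat_of_ord (i l s) == i l' s) = (nat_of_ord (i' l s) == i' l' s)) /\
  (forall l w, J w -> (nat_of_ord (i l s) < w) = (nat_of_ord (i' l s) < w) /\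
                (nat_of_ord (i l s) == w) = (nat_of_ord (i' l s) == w)).

Lemma stepA k (N : 'I_k -> nat) r (F : ('I_r -> idx N) -> Prop) (J : 'I_k -> pred nat) :
  (forall s v, flip F s v -> J s v) ->
  forall i0 i1, (forall s, hypS s (J s) i0 i1) -> (F i0 <-> F i1).
Proof.
move=> HJ i0 i1 Hs.
pose h (m : nat) : 'I_r -> idx N := fun l s' => if s' < m then i1 l s' else i0 l s'.
have Hm : forall m, m <= k -> (F i0 <-> F (h m)).
  elim=> [|m IH] Hmk.
    have -> : h 0 = i0 by apply: functional_extensionality => l; apply: functional_extensionality_dep.
    by [].
  rewrite IH ?(ltnW Hmk) //.
  pose s := Ordinal Hmk.
  apply: (stepB (HJ s)); case: (Hs s) => Hs1 Hs2; split.
  - move=> l s' Hs'; rewrite /h.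
    have -> : (s' < m.+1) = (s' < m).
      have : nat_of_ord s' != m by move: Hs'; rewrite -val_eqE.
      lia.
    by [].
  - move=> l l'; rewrite /h /= ltnn ltnSn; exact: Hs1.
  - move=> l w Jw; rewrite /h /= ltnn ltnSn; exact: Hs2.
have -> : i1 = h k.
  apply: functional_extensionality => l; apply: functional_extensionality_dep => s'.
  by rewrite /h ltn_ord.
exact: Hm.
Qed.
Lemma card_sum (T : finType) (A P : pred T) :
  #|[set y | A y && P y]| = \sum_(y | A y) (P y : nat).
Proof.
rewrite -sum1dep_card big_mkcond [RHS]big_mkcond; apply: eq_bigr => y _.
by case: (A y); case: (P y).
Qed.
Lemma indep (T : finType) (E : rel T) (D : nat) :
  (forall x, #|[set y | E x y]| <= D) ->
  forall K (A : {set T}), D.*2.+1 * K <= #|A| ->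
  exists S : {set T}, [/\ S \subset A, #|S| = K &
     {in S &, forall x y, x != y -> ~~ E x y}].
Proof.
move=> HD; elim=> [|K IH] A HA.
  exists set0; split; [exact: sub0set | by rewrite cards0 | by move=> ? ?; rewrite inE].
have Hout : forall y, \sum_(x in A) (E y x : nat) <= D.
  move=> y; apply: leq_trans (HD y).
  rewrite -(card_sum (mem A) (E y)); apply: subset_leq_card.
  by apply/subsetP => z; rewrite !inE => /andP[].
have A0 : 0 < #|A| by apply: leq_trans HA; rewrite mulnS.
have [x xA Hx] : exists2 x, x \in A & \sum_(y in A) (E y x : nat) <= D.
  case: (boolP [exists x in A, \sum_(y in A) (E y x : nat) <= D]) => [/exists_inP//|].
  move/exists_inPn => H; exfalso.
  have : \sum_(x in A) D.+1 <= \sum_(y in A) D.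
    apply: leq_trans (_ : _ <= \sum_(x in A) \sum_(y in A) (E y x : nat)) _.
      by apply: leq_sum => z zA; move: (H z zA); rewrite -ltnNge.
    by rewrite exchange_big /=; apply: leq_sum => y _; apply: Hout.
  rewrite !sum_nat_const leq_mul2l ltnn orbF; by case: #|A| A0.
pose Nb := [set y | (y \in A) && E x y] :|: [set y | (y \in A) && E y x].
have HNb : #|Nb| <= D.*2.
  apply: leq_trans (leq_card_setU _ _) _; rewrite -addnn leq_add //.
    by rewrite card_sum.
  by rewrite card_sum.
pose A' := A :\: (x |: Nb).
have HA' : D.*2.+1 * K <= #|A'|.
  rewrite /A' cardsD.
  have : #|A :&: (x |: Nb)| <= D.*2.+1.
    by apply: leq_trans (subset_leq_card (subsetIr A (x |: Nb))) _; rewrite cardsU1; case: (x \in Nb); rewrite /= ?add1n ?add0n ?ltnS ?HNb // (leq_trans HNb).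
  move: HA; rewrite mulnS; lia.
have [S' [S'A' HS' HiS']] := IH A' HA'.
have xS' : x \notin S'.
  apply/negP => /(subsetP S'A'); rewrite /A' !inE eqxx /=; by case.
exists (x |: S'); split.
- rewrite subUset sub1set xA /=; apply: subset_trans S'A' _; exact: subsetDl.
- by rewrite cardsU1 xS' HS'.
- move=> y z; rewrite !inE => /orP[/eqP->|yS] /orP[/eqP->|zS]; rewrite ?eqxx //.
  + move=> _; move/(subsetP S'A'): zS; rewrite /A' /Nb !inE negb_or => /andP[/andP[_ H] zA].
    by move: H; rewrite zA /= negb_or => /andP[].
  + move=> _; move/(subsetP S'A'): yS; rewrite /A' /Nb !inE negb_or => /andP[/andP[_ H] yA].
    by move: H; rewrite yA /= negb_or => /andP[].
  + exact: HiS'.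
Qed.

Lemma card_hit (T : finType) (vt : T -> nat) r (c : 'I_r -> nat) :
  injective vt -> #|[set t | [exists l, vt t == c l]]| <= r.
Proof.
move=> Hinj.
case: r c => [|r] c.
  rewrite (_ : [set t | _] = set0) ?cards0 //; apply/setP => t; rewrite !inE.
  by apply/existsP => -[[]].
case: (boolP [exists t : T, true]) => [/existsP [t0 _]|/existsPn H0]; last first.
  rewrite (_ : [set t | _] = set0) ?cards0 //; apply/setP => t; by move: (H0 t).
pose h (l : 'I_r.+1) := odflt t0 [pick t | vt t == c l].
apply: leq_trans (_ : #|[set h l | l in 'I_r.+1]| <= _); last first.
  by apply: leq_trans (leq_imset_card _ _) _; rewrite card_ord.
apply: subset_leq_card; apply/subsetP => t; rewrite inE => /existsP [l /eqP Hl].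
apply/imsetP; exists l => //; rewrite /h; case: pickP => [t' /eqP Ht'|/(_ t)]; last by rewrite Hl eqxx.
by apply: Hinj; rewrite Ht' Hl.
Qed.

Lemma shift_qftp (A : Type) (x vv : A -> nat) (b : A -> bool) :
  (forall p q, b p -> x p = vv p -> ~~ (b q && (x q == vv q)) -> x q <> vv p /\ x q <> (vv p).+1) ->
  qftp_eq x (fun p => if b p then sh (vv p) (x p) else x p).
Proof.
move=> H p q; rewrite /sh.
case Bp: (b p); case Bq: (b q); case: (eqVneq (x p) (vv p)) => Ep; case: (eqVneq (x q) (vv q)) => Eq'.
all: try (have [H1 H2] : x q <> vv p /\ x q <> (vv p).+1 by
   apply: (H p q Bp Ep); first [by rewrite Bq | by rewrite Bq /= (negbTE Eq')]).
all: try (have [H3 H4] : x p <> vv q /\ x p <> (vv q).+1 by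
   apply: (H q p Bq Eq'); first [by rewrite Bp | by rewrite Bp /= (negbTE Ep)]).
all: rewrite ?Ep ?Eq' ?eqxx /=.
all: try rewrite (negbTE Ep).
all: try rewrite (negbTE Eq').
all: split; lia.
Qed.

Lemma xor3 (A B C : Prop) : ~ (A <-> B) -> ~ (A <-> C) -> (B <-> C).
Proof. case: (classic A); case: (classic B); case: (classic C); tauto. Qed.

Lemma flips_shatter k (N : 'I_k -> nat) r (F : ('I_r -> idx N) -> Prop) (s : 'I_k) K
  (P : seq nat) :
  uniq P -> (forall v, v \in P -> flip F s v) -> (r.*2).*2.+1 * K <= size P ->
  exists base : 'I_K -> 'I_r -> idx N,
   forall S : {set 'I_K}, exists cfg : 'I_K -> 'I_r -> idx N,
    (forall s', qftp_eq (fun p : 'I_K * 'I_r => nat_of_ord (base p.1 p.2 s'))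
                        (fun p => nat_of_ord (cfg p.1 p.2 s'))) /\
    (forall t, F (cfg t) <-> t \in S).
Proof.
move=> Pu HP HK.
pose M := size P.
pose vt (t : 'I_M) := nth 0 P t.
have vt_inj : injective vt.
  by move=> t1 t2 /eqP; rewrite /vt nth_uniq // => /eqP/val_inj.
have Hw : forall t : 'I_M, flip F s (vt t) by move=> t; apply: HP; rewrite /vt mem_nth.
pose w t := proj1_sig (constructive_indefinite_description _ (Hw t)).
have wP : forall t, [/\ (vt t).+1 < N s, (exists l, nat_of_ord (w t l s) = vt t),
    (forall l, nat_of_ord (w t l s) <> (vt t).+1) & ~ (F (w t) <-> F (mv (w t) s (vt t)))].
  by move=> t; exact: (proj2_sig (constructive_indefinite_description _ (Hw t))).
pose E := fun t' t : 'I_M => (t' != t) &&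
   [exists l, (nat_of_ord (w t' l s) == vt t) || (nat_of_ord (w t' l s) == (vt t).+1)].
have HD : forall t', #|[set t | E t' t]| <= r.*2.
  move=> t'; rewrite -addnn.
  apply: leq_trans (_ : #|[set t | [exists l, vt t == w t' l s]] :|:
                          [set t | [exists l, (vt t).+1 == w t' l s]]| <= _).
    apply: subset_leq_card; apply/subsetP => t; rewrite !inE => /andP[_ /existsP[l /orP[]/eqP H]].
      by apply/orP; left; apply/existsP; exists l; rewrite H.
    by apply/orP; right; apply/existsP; exists l; rewrite H.
  apply: leq_trans (leq_card_setU _ _) _; apply: leq_add.
    exact: card_hit.
  apply: (card_hit (vt := fun t => (vt t).+1)) => t1 t2 /eqP; rewrite eqSS => /eqP; exact: vt_inj.
have HK' : (r.*2).*2.+1 * K <= #|[set: 'I_M]| by rewrite cardsT card_ord.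
have [S0 [_ HS0 HiS0]] := @indep _ E r.*2 HD K [set: 'I_M] HK'.
pose g (t : 'I_K) : 'I_M := enum_val (A := mem S0) (cast_ord (esym HS0) t).
have gS : forall t, g t \in S0 by move=> t; exact: enum_valP.
have g_inj : injective g by move=> t1 t2 /enum_val_inj/cast_ord_inj.
exists (fun t => w (g t)) => S.
pose sel (t : 'I_K) : bool :=
  if excluded_middle_informative (F (w (g t)) <-> t \in S) then false else true.
exists (fun t => if sel t then mv (w (g t)) s (vt (g t)) else w (g t)); split; last first.
  move=> t; rewrite /sel; case: excluded_middle_informative => // Hn.
  have [_ _ _ Hf] := wP (g t); exact: xor3 Hf Hn.
move=> s'; case: (eqVneq s' s) => [->|NE]; last first.
  have -> : (fun p : 'I_K * 'I_r => nat_of_ord ((if sel p.1 then mv (w (g p.1)) s (vt (g p.1)) else w (g p.1)) p.2 s'))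
     = (fun p => nat_of_ord (w (g p.1) p.2 s')).
    apply: functional_extensionality => p; case: (sel p.1) => //.
    by rewrite mv_val ?(negbTE NE) //; case: (wP (g p.1)).
  by move=> p q.
have -> : (fun p : 'I_K * 'I_r => nat_of_ord ((if sel p.1 then mv (w (g p.1)) s (vt (g p.1)) else w (g p.1)) p.2 s))
     = (fun p => if sel p.1 then sh (vt (g p.1)) (w (g p.1) p.2 s) else nat_of_ord (w (g p.1) p.2 s)).
  apply: functional_extensionality => p; case: (sel p.1) => //.
  by rewrite mv_val ?eqxx //; case: (wP (g p.1)).
apply: (shift_qftp (x := fun p : 'I_K * 'I_r => nat_of_ord (w (g p.1) p.2 s)) (vv := fun p => vt (g p.1))
  (b := fun p => sel p.1)).
move=> [t l] [t' l'] /= St Ep Hq.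
case: (eqVneq t' t) => [Et|Nt].
  subst t'; move: Hq; rewrite St /= => /eqP Hq; split => //.
  by case: (wP (g t)) => _ _ H _; apply: H.
have Ng : g t' != g t by apply/eqP => /g_inj Et; move: Nt; rewrite Et eqxx.
move: (HiS0 _ _ (gS t') (gS t) Ng); rewrite /E Ng /= negb_exists => /forallP /(_ l').
by rewrite negb_or => /andP[/eqP H1 /eqP H2].
Qed.

Definition rho n r m K (t : 'I_K) (v : 'I_n + 'I_r * 'I_m) :
   'I_n + ('I_#|{: 'I_K * 'I_r}| * 'I_m) :=
  match v with inl c => inl c | inr lc => inr (enum_rank (t, lc.1), lc.2) end.

Definition lit L n r m K (phi : form L ('I_n + 'I_r * 'I_m)) (S : {set 'I_K}) (t : 'I_K) :=
  if t \in S then frename phi (@rho n r m K t) else fNot (frename phi (@rho n r m K t)).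

Definition psi L n r m K (phi : form L ('I_n + 'I_r * 'I_m)) (S : {set 'I_K}) :
  form L ('I_#|{: 'I_K * 'I_r}| * 'I_m) :=
  exn (conj (map (lit phi S) (enum 'I_K))).

Definition Delta L n r m K (phi : form L ('I_n + 'I_r * 'I_m)) :
  seq {p : nat & form L ('I_p * 'I_m)} :=
  map (fun S => existT (fun p => form L ('I_p * 'I_m)) #|{: 'I_K * 'I_r}| (psi phi S))
      (enum {set 'I_K}).

Lemma sat_psi L (M : structure L) n r m K (phi : form L ('I_n + 'I_r * 'I_m)) S
   (e : 'I_#|{: 'I_K * 'I_r}| * 'I_m -> M) :
  sat (psi phi S) e <-> exists x : 'I_n -> M, forall t : 'I_K,
    (sat phi (fun v => match v with inl c => x c | inr lc => e (enum_rank (t, lc.1), lc.2) end)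
      <-> t \in S).
Proof.
have Ev : forall (x : 'I_n -> M) (t : 'I_K), (fun v => catv x e (@rho n r m K t v)) =
   (fun v => match v with inl c => x c | inr lc => e (enum_rank (t, lc.1), lc.2) end).
  by move=> x t; apply: functional_extensionality => -[c|[l m']].
rewrite /psi sat_exn; split => -[x Hx]; exists x.
  move=> t; have := proj1 (sat_conj _ _ _) Hx t (mem_enum _ t).
  rewrite /lit; case: (t \in S) => /=; rewrite sat_rename Ev //.
apply/sat_conj => t _; move: (Hx t); rewrite /lit; case: (t \in S) => /=; rewrite sat_rename Ev.
  by move=> [_ H]; apply: H.
by move=> [H _] H'; move: (H H').
Qed.

Lemma mem_In (T : eqType) (x : T) (s : seq T) : x \in s -> List.In x s.
Proof. elim: s => //= y s IH; rewrite inE => /orP[/eqP->|/IH H]; [by left | by right]. Qed.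

Lemma iff_of_eq (P Q : Prop) : P = Q -> (P <-> Q).
Proof. by move->. Qed.

Lemma In_map_seq (A B : Type) (f : A -> B) (x : A) (s : seq A) :
  List.In x s -> List.In (f x) (map f s).
Proof. elim: s => //= y s IH [->|H]; [by left | right; exact: IH]. Qed.

Lemma shatter_contra L (M : structure L) n r m (phi : form L ('I_n + 'I_r * 'I_m)) K
  k (N : 'I_k -> nat) (Npos : forall s, 0 < N s) (b : 'I_n -> M) (a : idx N -> 'I_m -> M) :
  @indiscernible L M m (Delta K phi) k N a ->
  ~ (exists (u : 'I_K -> 'I_n + 'I_r * 'I_m -> M) (w : {set 'I_K} -> 'I_n + 'I_r * 'I_m -> M),
       forall (i : 'I_K) (S : {set 'I_K}),
         sat phi (fun v => if (if v is inr _ then true else false) then u i v else w S v) <-> i \in S) ->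
  forall base : 'I_K -> 'I_r -> idx N,
  (forall S : {set 'I_K}, exists cfg : 'I_K -> 'I_r -> idx N,
    (forall s', qftp_eq (fun p : 'I_K * 'I_r => nat_of_ord (base p.1 p.2 s'))
                        (fun p => nat_of_ord (cfg p.1 p.2 s'))) /\
    (forall t, sat phi (fun v => match v with inl c => b c | inr lc => a (cfg t lc.1) lc.2 end)
               <-> t \in S)) -> False.
Proof.
move=> Hind HN base H.
have HS : forall S : {set 'I_K}, exists x : 'I_n -> M, forall t,
    sat phi (fun v => match v with inl c => x c | inr lc => a (base t lc.1) lc.2 end) <-> t \in S.
  move=> S; have [cfg [Hq Hf]] := H S.
  pose i0 (q : 'I_#|{: 'I_K * 'I_r}|) := base (enum_val q).1 (enum_val q).2.
  pose i1 (q : 'I_#|{: 'I_K * 'I_r}|) := cfg (enum_val q).1 (enum_val q).2.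
  have Hin : List.In (existT (fun p => form L ('I_p * 'I_m)) #|{: 'I_K * 'I_r}| (psi phi S)) (Delta K phi).
    apply: In_map_seq; apply: mem_In; exact: mem_enum.
  have := Hind _ Hin i0 i1.
  move=> /(_ (fun s q q' => Hq s (enum_val q) (enum_val q'))) /= Heq.
  have : sat (psi phi S) (fun z => a (i1 z.1) z.2).
    apply/sat_psi; exists b => t; rewrite -(Hf t); apply: iff_of_eq; congr sat.
    by apply: functional_extensionality => -[c|[l m']] //=; rewrite /i1 enum_rankK.
  move/Heq/sat_psi => [x Hx]; exists x => t; rewrite -(Hx t); apply: iff_of_eq; congr sat.
  by apply: functional_extensionality => -[c|[l m']] //=; rewrite /i0 enum_rankK.
pose xs S := proj1_sig (constructive_indefinite_description _ (HS S)).
have xsP : forall S t, sat phi (fun v => match v with inl c => xs S c | inr lc => a (base t lc.1) lc.2 end) <-> t \in S.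
  by move=> S; exact: (proj2_sig (constructive_indefinite_description _ (HS S))).
pose j0 : idx N := fun s => Ordinal (Npos s).
apply: HN.
exists (fun t v => match v with inl c => b c | inr lc => a (base t lc.1) lc.2 end).
exists (fun S v => match v with inl c => xs S c | inr lc => a j0 lc.2 end).
move=> i S; rewrite -(xsP S i); apply: iff_of_eq; congr sat.
by apply: functional_extensionality => -[c|[l m']].
Qed.

Theorem lemma3p5 (L : language) (M : structure L) (n r m : nat)
  (phi : form L ('I_n + 'I_r * 'I_m)) :
  NIP M phi ->
  exists (d' : nat) (Delta : seq {p : nat & form L ('I_p * 'I_m)}),
    forall (k : nat) (N : 'I_k -> nat), (forall s : 'I_k, 0 < N s) ->
    forall (b : 'I_n -> M) (a : idx N -> 'I_m -> M),
      @indiscernible L M m Delta k N a ->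
      exists j : 'I_d' -> idx N,
        forall i0 i1 : 'I_r -> idx N,
          (forall s : 'I_k,
             qftp_eq (tp_over (fun l => nat_of_ord (i0 l s)) (fun q => nat_of_ord (j q s)))
                     (tp_over (fun l => nat_of_ord (i1 l s)) (fun q => nat_of_ord (j q s)))) ->
          (sat phi (fun v => match v with
                             | inl c => b c
                             | inr lc => a (i0 lc.1) lc.2 end) <->
           sat phi (fun v => match v with
                             | inl c => b c
                             | inr lc => a (i1 lc.1) lc.2 end)).
Proof.
move=> HNIP.
have [K HK] := HNIP (fun v => if v is inr _ then true else false).
exists ((r.*2).*2.+1 * K), (Delta K phi).
move=> k N Npos b a Hind.
pose F (i : 'I_r -> idx N) :=
  sat phi (fun v => match v with inl c => b c | inr lc => a (i lc.1) lc.2 end).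
pose asb (Q : Prop) : bool := if excluded_middle_informative Q then true else false.
pose Pset (s : 'I_k) := [seq v <- iota 0 (N s) | asb (flip F s v)].
have HP : forall s v, flip F s v -> v \in Pset s.
  move=> s v Hf; rewrite mem_filter mem_iota /= /asb.
  case: excluded_middle_informative => //= _; case: Hf => i [H _ _ _]; lia.
have HP' : forall s v, v \in Pset s -> flip F s v.
  move=> s v; rewrite mem_filter /asb; case: excluded_middle_informative => //.
have Hsize : forall s, size (Pset s) < (r.*2).*2.+1 * K.
  move=> s; rewrite ltnNge; apply/negP => Hle.
  have Pu : uniq (Pset s) by apply: filter_uniq; exact: iota_uniq.
  have [base Hb] := flips_shatter Pu (HP' s) Hle.
  apply: (@shatter_contra L M n r m phi K k N Npos b a Hind _ base Hb).
  exact: HK.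
pose j (q : 'I_((r.*2).*2.+1 * K)) : idx N :=
  fun s => insubd (Ordinal (Npos s)) (nth 0 (Pset s) q).
exists j => i0 i1 Hq.
apply: (stepA (F := F) (J := fun s v => v \in Pset s)) => //.
move=> s; split.
  by move=> l l'; exact: (Hq s (inl l) (inl l')).
move=> l w Jw.
have Hidx : index w (Pset s) < (r.*2).*2.+1 * K.
  by apply: ltn_trans (Hsize s); rewrite index_mem.
have E : nat_of_ord (j (Ordinal Hidx) s) = w.
  rewrite /j val_insubd /= nth_index //.
  by move: Jw; rewrite mem_filter mem_iota => /andP[_ /andP[_ ->]].
by have := Hq s (inl l) (inr (Ordinal Hidx)); rewrite /tp_over /= E.
Qed.
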